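(* Let $T$ be a tree as below with an interior edge $e$, and suppose (after relabeling) that $\mathrm{de}(e)=\{1,\dots,k\}$. Let $T_e^-$ and $T_e^+$ be as below. Grade $\mathbb{K}[q]$ by $\deg q_{g_1\cdots g_n}=e_{g_1+\cdots+g_k}$, grade $\mathbb{K}[q]_-$ by $\deg q_{g_1\cdots g_k}=e_{g_1+\cdots+g_k}$, and grade $\mathbb{K}[q]_+$ by $\deg q_{h\,g_{k+1}\cdots g_n}=e_h$, where $e_h$ ($h\in G$) are the standard unit vectors of $\mathbb{Z}^G$; let $\mathcal{A}=\{e_h:h\in G\}$. Then $\mathcal{A}$ is linearly independent and $$I_{G,T}=I_{G,T_e^+}\times_{\mathcal{A}}I_{G,T_e^-},$$ where the toric fiber product variable corresponding to $q_{g_1\cdots g_n}$ is the product of $q_{h\,g_{k+1}\cdots g_n}\in\mathbb{K}[q]_+$ and $q_{g_1\cdots g_k}\in\mathbb{K}[q]_-$ with $h=g_1+\cdots+g_k$.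
   Context: $\mathbb{K}$ is a field, $G$ a finite group written additively (not necessarily abelian). $T$ is a tree with leaves labeled $1,\dots,n+1$, rooted at leaf $n+1$, with edges directed away from the root. For an edge $e$, $\mathrm{de}(e)$ is the set of leaves reachable from $e$ by a directed path; it is assumed that every $\mathrm{de}(e)$ is an interval of integers. For $g_1,\dots,g_n\in G$, $g_e=\sum_{i\in\mathrm{de}(e)}g_i$, summed in increasing order of $i$. $\mathbb{K}[q]=\mathbb{K}[q_{g_1\cdots g_n}:g_i\in G]$, $\mathbb{K}[a]=\mathbb{K}[a^{(e)}_h: e\in E(T),h\in G]$, $\phi_{G,T}:q_{g_1\cdots g_n}\mapsto\prod_{e\in E(T)}a^{(e)}_{g_e}$, and $I_{G,T}=\ker\phi_{G,T}$. Edges are partially ordered by $e'<e$ if there is a directed path from $e$ to $e'$. An interior edge is one not incident to any leaf. $T_e^-$ is the subtree consisting of edges $e'\le e$, rooted at the tail of $e$, with non-root leaves $1,\dots,k$; $T_e^+$ is the subtree of edges $e'$ with $e'\not<e$ (so $T_e^+\cap T_e^-=\{e\}$), rooted at $n+1$, whose non-root leaves are the head of $e$ (listed first, carrying group label $h$) followed by $k+1,\dots,n$. $\mathbb{K}[q]_-=\mathbb{K}[q_{g_1\cdots g_k}]$ and $\mathbb{K}[q]_+=\mathbb{K}[q_{h\,g_{k+1}\cdots g_n}]$ are the ambient rings of $I_{G,T_e^-}$ and $I_{G,T_e^+}$, defined by the same construction for these rooted trees. Toric fiber product: for polynomial rings $\mathbb{K}[x^i_j]$, $\mathbb{K}[y^i_k]$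 graded by $\deg x^i_j=\deg y^i_k=\mathbf{a}^i$ and homogeneous ideals $I,J$, $I\times_{\mathcal{A}}J$ is the kernel of $\mathbb{K}[z^i_{jk}]\to\mathbb{K}[x]/I\otimes_{\mathbb{K}}\mathbb{K}[y]/J$, $z^i_{jk}\mapsto x^i_j\otimes y^i_k$; here the degree classes are indexed by $h\in G$. *)

(* Defs.v *)
From HB Require Import structures.
From mathcomp Require Import all_boot all_order all_algebra all_fingroup.
From mathcomp Require Import mpoly.

Set Implicit Arguments.
Unset Strict Implicit.
Unset Printing Implicit Defensive.

Import GRing.Theory.
Local Open Scope ring_scope.

(* Rooted planar trees.  A rooted tree T with leaves 1..n+1, rooted at leaf  *)
(* n+1, is represented by the planar tree [t] hanging below the unique       *)
(* neighbour of the root (the root edge enters the root vertex of [t]).      *)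
(* Childless vertices are the leaves 1..n, numbered left to right; this is   *)
(* exactly the class of trees in which every de(e) is an interval.  Every    *)
(* vertex of [t] is the head of exactly one edge of T.                       *)
Inductive rtree := RNode of seq rtree.

Definition Leaf := RNode [::].

Definition is_leaf (t : rtree) : bool := if t is RNode [::] then true else false.

Fixpoint nleaves (t : rtree) : nat :=
  let: RNode cs := t in
  if cs is [::] then 1%N else sumn (map nleaves cs).

(* the intervals de(e) = [start, start+len) (0-based leaf indices) of all the *)
(* edges of the tree, one per vertex of [t]; [off] = leaves to the left.     *)
Fixpoint eints (t : rtree) (off : nat) : seq (nat * nat) :=
  let: RNode cs := t in
  (off, nleaves t) ::
  (fix aux (o : nat) (l : seq rtree) : seq (nat * nat) :=
     match l with
     | [::] => [::]
     | c :: l' => eints c o ++ aux (o + nleaves c)%N l'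
     end) off cs.

Definition edges (t : rtree) : seq (nat * nat) := eints t 0.

(* positions: paths of child indices from the root vertex of [t] *)
Fixpoint subtree (t : rtree) (p : seq nat) : option rtree :=
  match p with
  | [::] => Some t
  | i :: p' => let: RNode cs := t in
               if (i < size cs)%N then subtree (nth Leaf cs i) p' else None
  end.

Fixpoint graft (t : rtree) (p : seq nat) (s : rtree) : rtree :=
  match p with
  | [::] => s
  | i :: p' => let: RNode cs := t in
               RNode (set_nth Leaf cs i (graft (nth Leaf cs i) p' s))
  end.

Fixpoint offset (t : rtree) (p : seq nat) : nat :=
  match p with
  | [::] => 0%N
  | i :: p' => let: RNode cs := t in
               (sumn (map nleaves (take i cs)) + offset (nth Leaf cs i) p')%N
  end.


Fixpoint nleaves_gt0 (t : rtree) : (0 < nleaves t)%N :=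
  match t return (0 < nleaves t)%N with
  | RNode [::] => isT
  | RNode (c :: cs) => @ltn_addr 0 (nleaves c) _ (nleaves_gt0 c)
  end.

(* Group-based models.  G is the finite group gT (written multiplicatively   *)
(* in MathComp; g_1 + ... + g_k becomes the ordered product g_1 * ... * g_k).*)
Section GroupBased.
Variables (K : fieldType) (gT : finGroupType).

Definition tup (n : nat) := {ffun 'I_n -> gT}.

(* K[q] : one variable q_{g_1 ... g_n} per n-tuple of group elements *)
Definition qring (n : nat) := {mpoly K[#|tup n|]}.
(* K[a] : one variable a^(e)_h per edge e (indexed by 'I_m) and h in G *)
Definition aring (m : nat) := {mpoly K[#|{: 'I_m * gT}|]}.

(* g_e for an edge with de(e) = [iv.1, iv.1 + iv.2), summed in increasing order *)
Definition isum n (g : tup n) (iv : nat * nat) : gT :=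
  (\prod_(i < n | (iv.1 <= i < iv.1 + iv.2)%N) g i)%g.

Definition phi_img (t : rtree) (g : tup (nleaves t)) : aring (size (edges t)) :=
  \prod_(j < size (edges t)) 'X_(enum_rank (j, isum g (nth (0, 0)%N (edges t) j))).

Definition phiGT (t : rtree) : qring (nleaves t) -> aring (size (edges t)) :=
  mmap (@mpolyC _ K) (fun v => phi_img (enum_val v)).

Definition IGT (t : rtree) : qring (nleaves t) -> Prop :=
  fun f => @phiGT t f = 0.

End GroupBased.

Arguments phiGT : clear implicits.
Arguments IGT : clear implicits.

Definition ideal_gen (R : comNzRingType) (S : R -> Prop) (f : R) : Prop :=
  exists s : seq (R * R),
    (forall pr, pr \in s -> S pr.2) /\ f = \sum_(pr <- s) pr.1 * pr.2.

Section TFP.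
Variables (K : fieldType) (D : eqType) (X Y : finType).
Variables (degx : X -> D) (degy : Y -> D).

(* variables z^i_{jk}: pairs (x_j, y_k) of the same degree *)
Definition tfp_var := {xy : X * Y | degx xy.1 == degy xy.2}.

Definition xring := {mpoly K[#|X|]}.
Definition yring := {mpoly K[#|Y|]}.
Definition xyring := {mpoly K[#|{: X + Y}|]}.
Definition zring := {mpoly K[#|{: tfp_var}|]}.

Definition extx : xring -> xyring :=
  mmap (@mpolyC _ K) (fun i => 'X_(enum_rank (inl (enum_val i)))).
Definition exty : yring -> xyring :=
  mmap (@mpolyC _ K) (fun i => 'X_(enum_rank (inr (enum_val i)))).

Definition tfp_psi : zring -> xyring :=
  mmap (@mpolyC _ K) (fun i => let z := enum_val i in
     'X_(enum_rank (inl (val z).1)) * 'X_(enum_rank (inr (val z).2))).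

(* I x_A J = ker (K[z] -> K[x]/I (x)_K K[y]/J), realised through the         *)
(* canonical isomorphism K[x]/I (x)_K K[y]/J = K[x,y]/(I K[x,y] + J K[x,y]).  *)
Definition tfp (I : xring -> Prop) (J : yring -> Prop) : zring -> Prop :=
  fun f => ideal_gen
    (fun u => (exists p, I p /\ u = extx p) \/ (exists p, J p /\ u = exty p))
    (tfp_psi f).

End TFP.

Section Split.
Variables (K : fieldType) (gT : finGroupType).

Definition unitv (h : gT) : {ffun gT -> int} := [ffun h' => ((h' == h) : int)].

(* j-th entry (0-based) of a tuple, 1 if out of range *)
Definition gat n (g : tup gT n) (j : nat) : gT :=
  match (insub j : option 'I_n) with Some j' => g j' | None => 1%g end.

Definition degplus n (x : tup gT n) := unitv (gat x 0).
Definition degminus k (y : tup gT k) := unitv (\prod_(i < k) y i)%g.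

Variables (nplus k : nat).
Hypothesis nplus_gt0 : (0 < nplus)%N.

Definition hsum n (g : tup gT n) : gT := (\prod_(i < k) gat g i)%g.

(* q_{g_1...g_n} |-> (q_{h g_{k+1}...g_n}, q_{g_1...g_k}), h = g_1+...+g_k *)
Definition xplus n (g : tup gT n) : tup gT nplus :=
  [ffun i : 'I_nplus => if (i == 0 :> nat) then hsum g else gat g (k + i - 1)].
Definition yminus n (g : tup gT n) : tup gT k := [ffun i : 'I_k => gat g i].

Lemma deg_match n (g : tup gT n) :
  degplus (xplus g) == degminus (yminus g).
Proof.
rewrite /degplus /degminus /gat; case: insubP => [i _ /= i0|]; last by rewrite /= nplus_gt0.
rewrite ffunE i0 eqxx /hsum; apply/eqP; congr unitv; apply: eq_bigr => j _.
by rewrite ffunE /gat.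
Qed.

Definition zvar n (g : tup gT n) : tfp_var (@degplus nplus) (@degminus k) :=
  exist _ (xplus g, yminus g) (deg_match g).

Definition qsplit n : qring K gT n -> zring K (@degplus nplus) (@degminus k) :=
  mmap (@mpolyC _ K) (fun i => 'X_(enum_rank (zvar (enum_val i)))).

End Split.

(* Main.v *)
Require Import Defs.
From HB Require Import structures.
From mathcomp Require Import all_boot all_order all_algebra all_fingroup.
From mathcomp Require Import mpoly zify.
Set Implicit Arguments. Unset Strict Implicit. Unset Printing Implicit Defensive.
Import GRing.Theory.
Fixpoint eaux (o : nat) (l : seq rtree) : seq (nat * nat) :=
  match l with [::] => [::] | c :: l' => eints c o ++ eaux (o + nleaves c) l' end.

Definition kids (t : rtree) := let: RNode cs := t in cs.

Lemma eintsE t o : eints t o = (o, nleaves t) :: eaux o (kids t).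
Proof. case: t => cs /=; congr cons; elim: cs o => //= c cs IH o; by rewrite IH. Qed.

Fixpoint allT (P : rtree -> Prop) (l : seq rtree) : Prop :=
  if l is c :: l' then P c /\ allT P l' else True.

Definition rtree_ind2 (P : rtree -> Prop) (H : forall cs, allT P cs -> P (RNode cs)) : forall t, P t :=
  fix F t := let: RNode cs := t in
    H cs ((fix G (l : seq rtree) : allT P l :=
             match l return allT P l with [::] => I | c :: l' => conj (F c) (G l') end) cs).

Lemma nleavesE cs : nleaves (RNode cs) = if cs is [::] then 1 else sumn (map nleaves cs).
Proof. by []. Qed.

Lemma sumn_le_nleaves cs : sumn (map nleaves cs) <= nleaves (RNode cs).
Proof. by case: cs. Qed.

Definition within (lo hi : nat) (iv : nat * nat) := (lo <= iv.1) && (iv.1 + iv.2 <= hi).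

Lemma eints_bound t o : all (within o (o + nleaves t)) (eints t o).
Proof.
elim/rtree_ind2: t o => cs IH o; rewrite eintsE /= {1}/within /= leqnn leqnn /=.
have : all (within o (o + sumn (map nleaves cs))) (eaux o cs).
  elim: cs o IH => //= c cs IHc o [Hc Hcs].
  rewrite all_cat; apply/andP; split.
    apply/sub_all: (Hc o) => iv /andP[h1 h2]; apply/andP; split => //; lia.
  apply/sub_all: (IHc (o + nleaves c) Hcs) => iv /andP[h1 h2]; apply/andP; split => /=; lia.
apply: sub_all => iv /andP[h1 h2]; apply/andP; split => //.
apply: (leq_trans h2); rewrite leq_add2l; exact: sumn_le_nleaves.
Qed.

Lemma eaux_bound l o : all (within o (o + sumn (map nleaves l))) (eaux o l).
Proof.
elim: l o => //= c cs IHc o; rewrite all_cat; apply/andP; split.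
  apply/sub_all: (eints_bound c o) => iv /andP[h1 h2]; apply/andP; split => //; lia.
apply/sub_all: (IHc (o + nleaves c)) => iv /andP[h1 h2]; apply/andP; split => /=; lia.
Qed.

Definition shv (d : nat) (iv : nat * nat) := (iv.1 + d, iv.2).

Lemma eints_shift t o d : eints t (o + d) = map (shv d) (eints t o).
Proof.
elim/rtree_ind2: t o => cs IH o; rewrite !eintsE /=; congr cons.
elim: cs o IH => //= c cs IHc o [Hc Hcs].
by rewrite map_cat Hc -IHc // addnAC.
Qed.

Lemma eaux_shift l o d : eaux (o + d) l = map (shv d) (eaux o l).
Proof.
elim: l o => //= c cs IHc o; by rewrite map_cat eints_shift -IHc addnAC.
Qed.

Lemma eaux_cat l1 l2 o : eaux o (l1 ++ l2) = eaux o l1 ++ eaux (o + sumn (map nleaves l1)) l2.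
Proof. elim: l1 o => /= [|c l1 IH] o; first by rewrite addn0. by rewrite IH catA addnA. Qed.

Definition adj (o k : nat) (iv : nat * nat) :=
  if o + k <= iv.1 then (iv.1 - k.-1, iv.2)
  else if o + k <= iv.1 + iv.2 then (iv.1, iv.2 - k.-1) else iv.

Definition preP o k (iv : nat * nat) := (iv.1 + iv.2 <= o) || ((iv.1 <= o) && (o + k <= iv.1 + iv.2)).
Definition sufP o k (iv : nat * nat) := o + k <= iv.1.

Lemma set_nth_cat (l : seq rtree) i x : i < size l ->
  set_nth Leaf l i x = take i l ++ x :: drop i.+1 l.
Proof. elim: l i => //= c l IH [|i] //= Hi; by rewrite ?drop0 // IH. Qed.

Lemma nth_cat_split (l : seq rtree) i : i < size l ->
  l = take i l ++ nth Leaf l i :: drop i.+1 l.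
Proof. elim: l i => //= c l IH [|i] //= Hi; by rewrite ?drop0 // -IH. Qed.

Lemma nleaves_cat l1 x l2 : nleaves (RNode (l1 ++ x :: l2)) =
  sumn (map nleaves l1) + nleaves x + sumn (map nleaves l2).
Proof. by rewrite nleavesE; case: l1 => [|? ?]; rewrite /= ?map_cat ?sumn_cat /= ?addnA. Qed.

Lemma split_lemma p : forall t s off, subtree t p = Some s ->
  let o := off + offset t p in let k := nleaves s in
  [/\ nleaves (graft t p Leaf) + k.-1 = nleaves t,
      offset t p + k <= nleaves t &
  exists pre suf, [/\ eints t off = pre ++ eints s o ++ suf,
    eints (graft t p Leaf) off = map (adj o k) pre ++ (o, 1) :: map (adj o k) suf,
    all (preP o k) pre & all (sufP o k) suf]].
Proof.
elim: p => [|i p IH] t s off /=.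
  move=> [<-] /=; have := nleaves_gt0 t; split; first (rewrite /=; lia); first lia.
  exists [::], [::]; split => //; first by rewrite cats0 addn0.
  by rewrite ?addn0.
case: t => cs; case: ifP => // Hi Hc.
set c := nth Leaf cs i; set l1 := take i cs; set l2 := drop i.+1 cs.
have Ecs : cs = l1 ++ c :: l2 by exact: nth_cat_split.
set off' := off + sumn (map nleaves l1).
have [Hn Hb [pre' [suf' [E1 E2 P1 S1]]]] := IH c s off' Hc.
have kgt0 := nleaves_gt0 s.
rewrite set_nth_cat // -/l1 -/l2 -/c.
set c' := graft c p Leaf.
rewrite -/l1 {1 2 3}Ecs !nleaves_cat.
have Ho : off' + offset c p = off + (sumn (map nleaves l1) + offset c p) by rewrite addnA.
rewrite -Ho.
set o := off' + offset c p.
rewrite -/c' in Hn E2.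
split; first lia; first lia.
exists ((off, sumn (map nleaves l1) + nleaves c + sumn (map nleaves l2)) :: eaux off l1 ++ pre'),
       (suf' ++ eaux (off' + nleaves c) l2).
have Bl1 := eaux_bound l1 off.
split.
- rewrite eintsE nleaves_cat /= eaux_cat /= E1 -/off' -!catA //.
- rewrite eintsE nleaves_cat /= eaux_cat /= E2 -/off' -/o map_cat -!catA /= map_cat.
  congr (_ :: _).
    rewrite /adj /= ifF; last lia. rewrite ifT; last lia. congr pair; lia.
  congr (_ ++ _).
    rewrite -[LHS]map_id; apply/eq_in_map => iv /(allP Bl1) /andP[h1 h2].
    rewrite /adj ifF; last lia. rewrite ifF //; lia.
  congr (_ ++ _); congr (_ :: _); congr (_ ++ _).
  have -> : off' + nleaves c = (off' + nleaves c') + (nleaves s).-1 by lia.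
  rewrite (eaux_shift l2 (off' + nleaves c')) -map_comp -[LHS]map_id; apply/eq_in_map => iv /(allP (eaux_bound l2 _)) /andP[h1 h2].
  rewrite /= /adj /shv /= ifT; last lia. case: iv h1 h2 => a L /= h1 h2; congr pair; lia.
- rewrite /= all_cat P1 andbT; apply/andP; split.
    rewrite /preP /=; apply/orP; right; apply/andP; split; lia.
  apply/allP => iv /(allP Bl1) /andP[h1 h2]; rewrite /preP; apply/orP; left; lia.
- rewrite all_cat S1 /=; apply/allP => iv /(allP (eaux_bound l2 _)) /andP[h1 h2].
  rewrite /sufP; lia.
Qed.
Section GP.
Variable gT : finGroupType.
Definition ps (G : nat -> gT) a b := (\prod_(a <= i < b) G i)%g.

Lemma ps_filter (G : nat -> gT) n a b :
  (\prod_(0 <= i < n | (a <= i < b)%N) G i)%g = ps G a (minn b n).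
Proof.
elim: n => [|n IH]; first by rewrite big_geq // /ps big_geq //; lia.
rewrite big_mkcond big_nat_recr //= -big_mkcond IH.
case: (ltnP n b) => Hnb.
  rewrite andbT.
  have -> : minn b n.+1 = n.+1 by lia.
  case: (leqP a n) => Han /=; first by rewrite /ps big_nat_recr.
  by rewrite mulg1 /ps !big_geq //; lia.
rewrite andbF mulg1; congr ps; lia.
Qed.

Lemma isumE n (g : tup gT n) a L : isum g (a, L) = ps (gat g) a (minn (a + L) n).
Proof.
rewrite /isum /= -ps_filter big_mkord; apply: eq_bigr => i _.
by rewrite /gat valK.
Qed.

Lemma ps_shift (G : nat -> gT) a b d : ps G (a + d) (b + d) = ps (fun i => G (i + d)) a b.
Proof. by rewrite /ps big_addn addnK. Qed.

Lemma ps_cat (G : nat -> gT) a b c : (a <= b <= c)%N -> ps G a c = (ps G a b * ps G b c)%g.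
Proof. by move=> /andP[h1 h2]; rewrite /ps (big_cat_nat h1 h2). Qed.

Lemma ps_eq (G G' : nat -> gT) a b : (forall i, (a <= i < b)%N -> G i = G' i) -> ps G a b = ps G' a b.
Proof. by move=> H; apply: eq_big_nat. Qed.

Lemma ps_ltn (G : nat -> gT) a b : (a < b)%N -> ps G a b = (G a * ps G a.+1 b)%g.
Proof. by move=> h; rewrite /ps big_ltn. Qed.

Lemma ps_nil (G : nat -> gT) a b : (b <= a)%N -> ps G a b = 1%g.
Proof. by move=> h; rewrite /ps big_geq. Qed.


Section Isum.
Variables (np k n : nat).
Hypotheses (Hn : np + k.-1 = n) (kgt0 : (0 < k)%N) (npgt0 : (0 < np)%N).
Variable g : tup gT n.
Local Notation xg := (xplus np k g).
Local Notation yg := (yminus k g).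

Lemma gat_out m (h : tup gT m) i : (m <= i)%N -> gat h i = 1%g.
Proof. by move=> H; rewrite /gat insubF // ltnNge H. Qed.
Lemma gat_in m (h : tup gT m) i (Hi : (i < m)%N) : gat h i = h (Ordinal Hi).
Proof. by rewrite /gat insubT. Qed.

Lemma hsumE : hsum k g = ps (gat g) 0 k.
Proof. by rewrite /hsum /ps big_mkord. Qed.

Lemma gat_x0 : gat xg 0 = hsum k g.
Proof. by rewrite (gat_in _ npgt0) ffunE. Qed.

Lemma gat_xi i : (1 <= i < np)%N -> gat xg i = gat g (i + k.-1).
Proof.
move=> /andP[h1 h2]; rewrite (gat_in _ h2) ffunE /= ifF; last by case: i h1 h2.
congr gat; lia.
Qed.

Lemma gat_yi i : (i < k)%N -> gat yg i = gat g i.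
Proof. by move=> h; rewrite (gat_in _ h) ffunE. Qed.

Lemma isum_minus a L : (a + L <= k)%N -> isum g (a, L) = isum yg (a, L).
Proof.
move=> h; rewrite !isumE; have -> : minn (a + L) n = a + L by lia.
have -> : minn (a + L) k = a + L by lia.
apply: ps_eq => i hi; rewrite gat_yi //; lia.
Qed.

Lemma isum_e : isum g (0, k) = isum xg (0, 1).
Proof.
rewrite !isumE; have -> : minn (0 + 1) np = 1 by lia.
have -> : minn (0 + k) n = k by lia.
by rewrite [RHS]ps_ltn // [X in (_ * X)%g]ps_nil // mulg1 gat_x0 hsumE.
Qed.

Lemma isum_plus iv : preP 0 k iv || sufP 0 k iv -> isum g iv = isum xg (adj 0 k iv).
Proof.
case: iv => a L; rewrite /preP /sufP /adj /=.
case: (leqP k a) => Hka /=.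
  move=> _; rewrite !isumE.
  have [a' Ea] : exists a', a = a' + k.-1 by exists (a - k.-1); lia.
  rewrite Ea addnK.
  have -> : minn (a' + k.-1 + L) n = minn (a' + L) np + k.-1 by lia.
  rewrite ps_shift; apply: ps_eq => i hi; rewrite gat_xi //; lia.
case: (leqP k (a + L)) => HkL /=.
  move=> H; have Ha : a = 0 by lia. subst a; rewrite !isumE /=.
  rewrite [LHS](@ps_cat _ 0 k); last lia.
  rewrite [RHS]ps_ltn; last lia.
  rewrite gat_x0 hsumE; congr (_ * _)%g; rewrite !add0n.
  have -> : ps (gat g) k (minn L n) = ps (fun i => gat g (i + k.-1)) 1 (minn (L - k.-1) np).
    rewrite -ps_shift; congr ps; lia.
  apply: ps_eq => i hi; rewrite gat_xi //; lia.
move=> H; have [-> ->] : a = 0 /\ L = 0 by lia.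
by rewrite !isumE !ps_nil //; lia.
Qed.
End Isum.
End GP.

Local Open Scope ring_scope.
Section Qf.
Variable R : comNzRingType.
Fixpoint Qf (F : nat -> nat * nat -> R) (l : seq (nat * nat)) : R :=
  if l is x :: l' then F 0%N x * Qf (fun j => F j.+1) l' else 1.

Lemma QfE F l : Qf F l = \prod_(j < size l) F j (nth (0, 0)%N l j).
Proof. elim: l F => [|x l IH] F /=; first by rewrite big_ord0. by rewrite big_ord_recl IH. Qed.

Lemma Qf_cat F l1 l2 : Qf F (l1 ++ l2) = Qf F l1 * Qf (fun j => F (size l1 + j)%N) l2.
Proof. elim: l1 F => [|x l1 IH] F /=; first by rewrite mul1r. by rewrite IH mulrA. Qed.

Lemma Qf_map F f l : Qf F (map f l) = Qf (fun j iv => F j (f iv)) l.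
Proof. by elim: l F => //= x l IH F; rewrite IH. Qed.

Lemma Qf_eq F F' l : (forall j, (j < size l)%N -> F j (nth (0, 0)%N l j) = F' j (nth (0, 0)%N l j)) ->
  Qf F l = Qf F' l.
Proof.
elim: l F F' => //= x l IH F F' H; rewrite (H 0%N) //; congr (_ * _).
by apply: IH => j hj; apply: (H j.+1).
Qed.

Lemma Qf1 l : Qf (fun _ _ => 1) l = 1.
Proof. by elim: l => //= x l ->; rewrite mulr1. Qed.
End Qf.

Lemma rmorph_Qf (R S : comNzRingType) (f : {rmorphism R -> S}) F l :
  f (Qf F l) = Qf (fun j iv => f (F j iv)) l.
Proof. elim: l F => /= [|x l IH] F; first exact: rmorph1. by rewrite rmorphM IH. Qed.

Section Vars.
Variables (K : fieldType) (gT : finGroupType).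

Definition var (m : nat) (j : nat) (h : gT) : aring K gT m :=
  if (insub j : option 'I_m) is Some j' then 'X_(enum_rank (j', h)) else 1.

Lemma phi_imgE (t : rtree) (g : tup gT (nleaves t)) :
  phi_img K g = Qf (fun j iv => var (size (edges t)) j (isum g iv)) (edges t).
Proof. by rewrite /phi_img QfE; apply: eq_bigr => j _; rewrite /var valK. Qed.

Definition mapv (m m' : nat) (r : nat -> gT -> aring K gT m') : aring K gT m -> aring K gT m' :=
  mmap (@mpolyC _ K) (fun v => r (val (enum_val v).1) (enum_val v).2).

Lemma mapv_var (m m' : nat) (r : nat -> gT -> aring K gT m') j h : (j < m)%N -> mapv (m:=m) r (var m j h) = r j h.
Proof. move=> Hj; rewrite /mapv /var insubT /= mmapX mmap1U enum_rankK //. Qed.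

Lemma mapv_Qf (m m' : nat) (r : nat -> gT -> aring K gT m') F l :
  mapv (m:=m) r (Qf F l) = Qf (fun j iv => mapv (m:=m) r (F j iv)) l.
Proof. exact: (rmorph_Qf (mmap (@mpolyC _ K) (fun v => r (val (enum_val v).1) (enum_val v).2))). Qed.
End Vars.
Section Core.
Variables (K : fieldType) (gT : finGroupType).
Variables (n np k : nat).
Hypotheses (Hn : (np + k.-1)%N = n) (kgt0 : (0 < k)%N) (npgt0 : (0 < np)%N).
Variables (m mp mm : nat) (pre rest suf : seq (nat * nat)).
Let Em := (0, k)%N :: rest.
Let Et := pre ++ Em ++ suf.
Let Ep := map (adj 0 k) pre ++ (0, 1)%N :: map (adj 0 k) suf.
Hypotheses (Hm : size Et = m) (Hmp : size Ep = mp) (Hmm : size Em = mm).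
Hypotheses (Hpre : all (preP 0 k) pre) (Hsuf : all (sufP 0 k) suf) (Hbnd : all (within 0 (0 + k)) Em).
Let P := size pre.
Let M := size Em.

Definition rp (j : nat) (h : gT) : aring K gT m :=
  if (j < P)%N then var K m j h else if j == P then 1 else var K m (j + M.-1) h.
Definition rm (j : nat) (h : gT) : aring K gT m := var K m (P + j) h.
Definition pp (j : nat) (h : gT) : aring K gT mp :=
  if (j < P)%N then var K mp j h else if j == P then var K mp P h
  else if (j < P + M)%N then 1 else var K mp (j - M.-1) h.
Definition pm (j : nat) (h : gT) : aring K gT mm :=
  if (P <= j < P + M)%N then var K mm (j - P) h else 1.

Variable g : tup gT n.
Local Notation xg := (xplus np k g).
Local Notation yg := (yminus k g).

Definition Phi m' n' (h : tup gT n') (E : seq (nat * nat)) : aring K gT m' :=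
  Qf (fun j iv => var K m' j (isum h iv)) E.

Lemma M0 : (0 < M)%N. Proof. by rewrite /M /Em. Qed.

Lemma L1 : Phi m g Et = mapv (m := mp) rp (Phi mp xg Ep) * mapv (m := mm) rm (Phi mm yg Em).
Proof.
have M0 := M0.
have E1 : mapv (m := mp) rp (Phi mp xg Ep) =
    Qf (fun j iv => var K m j (isum xg (adj 0 k iv))) pre *
    Qf (fun j iv => var K m (P + (M + j)) (isum xg (adj 0 k iv))) suf.
  rewrite /Phi mapv_Qf (Qf_eq (F' := fun j iv => rp j (isum xg iv))); last first.
    by move=> j hj /=; rewrite mapv_var // -Hmp.
  rewrite /Ep Qf_cat /= !Qf_map size_map -/P addn0 {2}/rp ltnn eqxx mul1r; congr (_ * _).
    by apply: Qf_eq => j hj /=; rewrite /rp hj.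
  apply: Qf_eq => j hj /=; rewrite /rp ifF; last lia. rewrite ifF; last lia.
  congr var; lia.
have E2 : mapv (m := mm) rm (Phi mm yg Em) =
    Qf (fun j iv => var K m (P + j) (isum g iv)) Em.
  rewrite /Phi mapv_Qf; apply: Qf_eq => j hj /=; rewrite mapv_var -?Hmm // /rm.
  case E : (nth _ _ _) => [a L]; rewrite (isum_minus Hn kgt0 npgt0) //.
  have := all_nthP (0, 0)%N Hbnd j hj; rewrite E /within /=; lia.
rewrite E1 E2 /Phi /Et !Qf_cat -/P -/M.
rewrite [X in X * _ = _](Qf_eq (F' := fun j iv => var K m j (isum xg (adj 0 k iv)))); last first.
  move=> j hj /=; rewrite -(isum_plus Hn kgt0 npgt0) //; apply/orP; left; exact: (all_nthP _ Hpre).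
rewrite [X in _ * (_ * X) = _](Qf_eq (F' := fun j iv => var K m (P + (M + j)) (isum xg (adj 0 k iv)))); last first.
  move=> j hj /=; rewrite -(isum_plus Hn kgt0 npgt0) //; apply/orP; right; exact: (all_nthP _ Hsuf).
by rewrite mulrCA [RHS]mulrC.
Qed.

Lemma L2 : mapv (m := m) pp (Phi m g Et) = Phi mp xg Ep.
Proof.
have M0 := M0.
rewrite /Phi mapv_Qf (Qf_eq (F' := fun j iv => pp j (isum g iv))); last first.
  by move=> j hj /=; rewrite mapv_var // -Hm.
rewrite /Et /Ep !Qf_cat !Qf_map size_map -/P -/M /= addn0.
congr (_ * _).
  apply: Qf_eq => j hj /=; rewrite /pp hj -(isum_plus Hn kgt0 npgt0) //.
  apply/orP; left; exact: (all_nthP _ Hpre).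
rewrite -mulrA; congr (_ * _).
  by rewrite /pp ltnn eqxx (isum_e Hn kgt0 npgt0).
rewrite (Qf_eq (F' := fun _ _ => 1) (l := rest)); last first.
  move=> j hj /=; rewrite /pp ifF; last lia. rewrite ifF; last lia.
  rewrite ifT //; rewrite /M /Em /=; lia.
rewrite Qf1 mul1r Qf_map; apply: Qf_eq => j hj /=.
rewrite /pp ifF; last lia. rewrite ifF; last lia. rewrite ifF; last lia.
rewrite -(isum_plus Hn kgt0 npgt0); last by apply/orP; right; exact: (all_nthP _ Hsuf).
congr var; lia.
Qed.

Lemma L3 : mapv (m := m) pm (Phi m g Et) = Phi mm yg Em.
Proof.
have M0 := M0.
rewrite /Phi mapv_Qf (Qf_eq (F' := fun j iv => pm j (isum g iv))); last first.
  by move=> j hj /=; rewrite mapv_var // -Hm.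
rewrite /Et !Qf_cat -/P -/M.
rewrite (Qf_eq (F' := fun _ _ => 1) (l := pre)); last first.
  by move=> j hj /=; rewrite /pm ifF //; lia.
rewrite (Qf_eq (F' := fun _ _ => 1) (l := suf)); last first.
  by move=> j hj /=; rewrite /pm ifF //; lia.
rewrite !Qf1 mul1r mulr1; apply: Qf_eq => j hj /=.
rewrite /pm ifT; last lia.
case E : (nth _ _ _) => [a L]; rewrite (isum_minus Hn kgt0 npgt0); last first.
  have := all_nthP (0, 0)%N Hbnd j hj; rewrite E /within /=; lia.
congr var; lia.
Qed.

End Core.
Section Alg.
Variable K : fieldType.

Lemma mmapXi n (S : nzRingType) (f : {rmorphism K -> S}) (h : 'I_n -> S) i : mmap f h 'X_i = h i.
Proof. by rewrite mmapX mmap1U. Qed.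

Lemma mmap_ext n (S : nzRingType) (f f' : K -> S) (h h' : 'I_n -> S) p :
  f =1 f' -> h =1 h' -> mmap f h p = mmap f' h' p.
Proof.
move=> Hf Hh; rewrite /mmap; apply: eq_bigr => m _; rewrite Hf; congr (_ * _).
exact: mmap1_eq.
Qed.

Lemma mmap_uniq n (S : comNzRingType) (F : {rmorphism {mpoly K[n]} -> S}) p :
  F p = mmap (F \o (@mpolyC n K)) (fun i => F 'X_i) p.
Proof.
rewrite [p in F p]mpolyE rmorph_sum /mmap; apply: eq_bigr => m _.
rewrite -mul_mpolyC (rmorphM F) mpolyXE_id rmorph_prod /mmap1; congr (_ * _).
by apply: eq_bigr => i _; rewrite rmorphXn.
Qed.

Lemma mmap_comp n n' (S : comNzRingType) (h : 'I_n -> {mpoly K[n']})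
    (F : {rmorphism {mpoly K[n']} -> S}) p :
  F (mmap (@mpolyC n' K) h p) = mmap (F \o (@mpolyC n' K)) (fun i => F (h i)) p.
Proof.
have := mmap_uniq (F \o (mmap (@mpolyC n' K) h)) p => /= ->.
apply: mmap_ext => [c|i] /=; first by rewrite mmapC.
by rewrite mmapXi.
Qed.

Section Ideal.
Variables (R : comNzRingType) (S : R -> Prop).
Lemma ideal0 : ideal_gen S 0.
Proof. by exists [::]; split => //; rewrite big_nil. Qed.
Lemma idealD a b : ideal_gen S a -> ideal_gen S b -> ideal_gen S (a + b).
Proof.
move=> [s1 [H1 ->]] [s2 [H2 ->]]; exists (s1 ++ s2); split; last by rewrite big_cat.
by move=> pr; rewrite mem_cat => /orP[]; [apply: H1|apply: H2].
Qed.
Lemma idealM r a : ideal_gen S a -> ideal_gen S (r * a).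
Proof.
move=> [s1 [H1 ->]]; exists (map (fun pr => (r * pr.1, pr.2)) s1); split.
  move=> pr /mapP[q Hq ->]; exact: (H1 q Hq).
by rewrite big_map mulr_sumr; apply: eq_bigr => pr _; rewrite mulrA.
Qed.
Lemma idealS u : S u -> ideal_gen S u.
Proof. by move=> Hu; exists [:: (1, u)]; split; [move=> pr; rewrite inE => /eqP ->|rewrite big_seq1 mul1r]. Qed.
Lemma ideal_sum (I : Type) (s : seq I) (F : I -> R) :
  (forall i, ideal_gen S (F i)) -> ideal_gen S (\sum_(i <- s) F i).
Proof.
move=> H; elim: s => [|i s IH]; first by rewrite big_nil; exact: ideal0.
by rewrite big_cons; apply: idealD.
Qed.
End Ideal.

Lemma binom_decomp N N' (phi : {additive {mpoly K[N]} -> {mpoly K[N']}})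
    (w : 'X_{1..N} -> 'X_{1..N'})
    (Hw : forall c m, phi (c *: 'X_[m]) = c *: 'X_[w m]) f :
  phi f = 0 -> exists r : 'X_{1..N} -> 'X_{1..N},
    (forall m, w (r m) = w m) /\ \sum_(m <- msupp f) f@_m *: 'X_[r m] = 0.
Proof.
move=> H0; set S := msupp f.
pose r m := nth m S (find (fun m' => w m' == w m) S).
have Hr : forall m, w (r m) = w m.
  move=> m; rewrite /r; case: (boolP (has (fun m' => w m' == w m) S)) => Hh.
    by apply/eqP; exact: (nth_find m Hh).
  by rewrite nth_default // leqNgt -has_find.
have Hrr : forall m m', m \in S -> m' \in S -> (r m == r m') = (w m == w m').
  move=> m m' Hm Hm'; apply/eqP/eqP => E; first by rewrite -(Hr m) -(Hr m') E.
  have Hh : forall x, x \in S -> has (fun m' => w m' == w x) S.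
    by move=> x Hx; apply/hasP; exists x.
  rewrite /r E; apply: set_nth_default.
  by rewrite -has_find; apply: Hh.
exists r; split => //.
have Hphi : phi f = \sum_(m <- S) f@_m *: 'X_[w m].
  by rewrite {1}[f]mpolyE raddf_sum; apply: eq_bigr => m _; rewrite Hw.
apply/mpolyP => u; rewrite mcoeff0 raddf_sum /=.
under eq_bigr do rewrite mcoeffZ mcoeffX.
case: (boolP (has (fun m => r m == u) S)) => Hu; last first.
  rewrite big_seq big1 // => m Hm; case: eqP => E; last by rewrite mulr0.
  by case/negP: Hu; apply/hasP; exists m => //; rewrite E.
move/hasP: Hu => [m1 Hm1 /eqP Em1].
have := congr1 (mcoeff (w m1)) Hphi; rewrite H0 mcoeff0 raddf_sum /= => E0.
transitivity (\sum_(i <- S) (f@_i *: 'X_[w i])@_(w m1)); last by rewrite -E0.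
rewrite !big_seq; apply: eq_bigr => m Hm; rewrite mcoeffZ mcoeffX; congr (_ * _%:R).
by rewrite -Em1 Hrr // eq_sym.
Qed.
End Alg.

Lemma unitv_indep (gT : finGroupType) (c : gT -> int) :
  \sum_(h : gT) (unitv h *~ c h) = 0 :> {ffun gT -> int} -> forall h, c h = 0.
Proof.
move=> H h; have := congr1 (fun F : {ffun gT -> int} => F h) H => /=.
rewrite sum_ffunE ffunE (bigD1 h) //= big1 => [|h' Hh'].
  by rewrite ffunMzE /unitv ffunE eqxx addr0 => <-; rewrite mulrzz; lia.
by rewrite ffunMzE /unitv ffunE eq_sym (negbTE Hh') mul0rz.
Qed.

Lemma mmap_comp2 (K : fieldType) n n' n'' (S : comNzRingType) (h : 'I_n -> {mpoly K[n']})
    (h' : 'I_n' -> {mpoly K[n'']}) (F : {rmorphism {mpoly K[n''] } -> S}) p :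
  F (mmap (@mpolyC _ K) h' (mmap (@mpolyC _ K) h p)) =
  mmap (F \o (@mpolyC _ K)) (fun i => F (mmap (@mpolyC _ K) h' (h i))) p.
Proof.
have := mmap_comp h (F \o mmap (@mpolyC _ K) h') p => /= ->.
by apply: mmap_ext => [c|i] //=; rewrite mmapC.
Qed.

Lemma mmapCXi (K : fieldType) n n' (h : 'I_n -> {mpoly K[n']}) i :
  mmap (@mpolyC n' K) h 'X_i = h i.
Proof. by rewrite mmapX mmap1U. Qed.

Lemma mmapCM (K : fieldType) n n' (h : 'I_n -> {mpoly K[n']}) p q :
  mmap (@mpolyC n' K) h (p * q) = mmap (@mpolyC n' K) h p * mmap (@mpolyC n' K) h q.
Proof. exact: rmorphM. Qed.

Lemma mmapC_sum (K : fieldType) n n' (h : 'I_n -> {mpoly K[n']}) (I : Type) (r : seq I) (F : I -> {mpoly K[n]}) :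
  mmap (@mpolyC n' K) h (\sum_(i <- r) F i) = \sum_(i <- r) mmap (@mpolyC n' K) h (F i).
Proof. exact: raddf_sum. Qed.

Lemma mmapC0 (K : fieldType) n n' (h : 'I_n -> {mpoly K[n']}) : mmap (@mpolyC n' K) h 0 = 0.
Proof. exact: mmap0. Qed.

Lemma mmapC_prod (K : fieldType) n n' (h : 'I_n -> {mpoly K[n']}) (I : Type) (r : seq I) (F : I -> {mpoly K[n]}) :
  mmap (@mpolyC n' K) h (\prod_(i <- r) F i) = \prod_(i <- r) mmap (@mpolyC n' K) h (F i).
Proof. exact: rmorph_prod. Qed.

Lemma mmapCXn (K : fieldType) n n' (h : 'I_n -> {mpoly K[n']}) p e :
  mmap (@mpolyC n' K) h (p ^+ e) = (mmap (@mpolyC n' K) h p) ^+ e.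
Proof. exact: rmorphXn. Qed.

Lemma mmapCX (K : fieldType) n n' (h : 'I_n -> {mpoly K[n']}) m :
  mmap (@mpolyC n' K) h 'X_[m] = \prod_(i < n) h i ^+ m i.
Proof. by rewrite mmapX. Qed.

Lemma mmapCZ (K : fieldType) n n' (h : 'I_n -> {mpoly K[n']}) c p :
  mmap (@mpolyC n' K) h (c *: p) = c *: mmap (@mpolyC n' K) h p.
Proof. by rewrite mmapZ mul_mpolyC. Qed.

Lemma mmapCC (K : fieldType) n n' (h : 'I_n -> {mpoly K[n']}) c :
  mmap (@mpolyC n' K) h c%:MP = c%:MP.
Proof. by rewrite mmapC. Qed.

Lemma mmapCB (K : fieldType) n n' (h : 'I_n -> {mpoly K[n']}) p q :
  mmap (@mpolyC n' K) h (p - q) = mmap (@mpolyC n' K) h p - mmap (@mpolyC n' K) h q.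
Proof. exact: raddfB. Qed.

Lemma mprodX_U n (R : nzRingType) (F : nat -> 'I_n) (N : nat) :
  \prod_(j < N) ('X_(F j) : {mpoly R[n]}) = 'X_[\sum_(j < N) U_(F j)].
Proof. by rewrite -mprodXE. Qed.

Unset Implicit Arguments.

Theorem theorem3p9 (K : fieldType) (gT : finGroupType)
    (t : rtree) (p : seq nat) (s : rtree)
    (Hsub : subtree t p = Some s)
    (Hint_tail : p != [::]) (Hint_head : ~~ is_leaf s)
    (Hde : offset t p = 0%N) :
  let tplus := graft t p Leaf in
  let k := nleaves s in
  (forall c : gT -> int, \sum_(h : gT) (unitv h *~ c h) = 0 :> {ffun gT -> int} -> forall h, c h = 0)
  /\
  (forall f : qring K gT (nleaves t),
     IGT K gT t f <->
     @tfp K _ _ _ (@degplus gT (nleaves tplus)) (@degminus gT k)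
       (IGT K gT tplus) (IGT K gT s)
       (qsplit k (nleaves_gt0 tplus) f)).
Proof.
move=> tplus k; split; first exact: unitv_indep.
have kgt0 : (0 < k)%N := nleaves_gt0 s.
have npgt0 := nleaves_gt0 tplus.
have [Hn _ [pre [suf [E1 E2 HP HS]]]] := split_lemma 0 Hsub.
rewrite Hde add0n in E1 E2 HP HS.
rewrite (eintsE s) in E1.
set rest := eaux 0 (kids s) in E1.
have Hbnd : all (within 0 (0 + k)) ((0, k)%N :: rest) by rewrite -eintsE eints_bound.
have Hm : size (pre ++ ((0, k)%N :: rest) ++ suf) = size (edges t) by rewrite /edges E1.
have Hmp : size (map (adj 0 k) pre ++ (0, 1)%N :: map (adj 0 k) suf) = size (edges tplus) by rewrite /edges E2.
have Hmm : size ((0, k)%N :: rest) = size (edges s) by rewrite /edges eintsE.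
have HEt : edges t = pre ++ ((0, k)%N :: rest) ++ suf by rewrite /edges E1.
have HEp : edges tplus = map (adj 0 k) pre ++ (0, 1)%N :: map (adj 0 k) suf by rewrite /edges E2.
have HEs : edges s = (0, k)%N :: rest by rewrite /edges eintsE.
have PT : forall g : tup gT (nleaves t), phi_img K g = Phi K (size (edges t)) g (pre ++ ((0, k)%N :: rest) ++ suf).
  by move=> g; rewrite phi_imgE [X in Qf _ X]HEt.
have PP : forall g : tup gT (nleaves tplus), phi_img K g = Phi K (size (edges tplus)) g (map (adj 0 k) pre ++ (0, 1)%N :: map (adj 0 k) suf).
  by move=> g; rewrite phi_imgE [X in Qf _ X]HEp.
have PS : forall g : tup gT k, phi_img K g = Phi K (size (edges s)) g ((0, k)%N :: rest).
  by move=> g; rewrite phi_imgE [X in Qf _ X]HEs.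
pose rpf := rp K (gT:=gT) k (size (edges t)) pre rest.
pose rmf := rm K (gT:=gT) (size (edges t)) pre.
pose ppf := pp K (gT:=gT) k (size (edges tplus)) pre rest.
pose pmf := pm K (gT:=gT) k (size (edges s)) pre rest.
have KL1 : forall g : tup gT (nleaves t), phi_img K g =
    mapv (m := size (edges tplus)) rpf (phi_img K (xplus (nleaves tplus) k g)) *
    mapv (m := size (edges s)) rmf (phi_img K (yminus k g)).
  by move=> g; rewrite PT PP PS; exact: (L1 K Hn kgt0 npgt0 Hm Hmp Hmm HP HS Hbnd g).
have KL2 : forall g : tup gT (nleaves t),
    mapv (m := size (edges t)) ppf (phi_img K g) = phi_img K (xplus (nleaves tplus) k g).
  by move=> g; rewrite PT PP; exact: (L2 K Hn kgt0 npgt0 Hm Hmp Hmm HP HS Hbnd g).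
have KL3 : forall g : tup gT (nleaves t),
    mapv (m := size (edges t)) pmf (phi_img K g) = phi_img K (yminus k g).
  by move=> g; rewrite PT PS; exact: (L3 K Hn kgt0 npgt0 Hm Hmp Hmm HP HS Hbnd g).
pose hPhi := fun v : 'I_#|{: tup gT (nleaves tplus) + tup gT k}| =>
  match enum_val v with
  | inl x => mapv (m := size (edges tplus)) rpf (@phi_img K gT tplus x)
  | inr y => mapv (m := size (edges s)) rmf (@phi_img K gT s y) end.
pose Phi0 := mmap (@mpolyC _ K) hPhi.
have CC : forall f, phiGT K gT t f = Phi0 (tfp_psi (qsplit k (nleaves_gt0 tplus) f)).
  move=> f; rewrite /phiGT /tfp_psi /qsplit /Phi0 mmap_comp2.
  apply: mmap_ext => [c|i] /=; first by rewrite mmapC.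
  rewrite (mmapCXi _ (enum_rank (zvar k (nleaves_gt0 tplus) (enum_val i)))) enum_rankK /= mmapCM !(mmapCXi hPhi) /hPhi !enum_rankK.
  exact: KL1.
have CA : forall q, Phi0 (extx (tup gT k) q) = mapv (m := size (edges tplus)) rpf (phiGT K gT tplus q).
  move=> q; rewrite /extx /phiGT /Phi0 /mapv !mmap_comp.
  apply: mmap_ext => [c|i] /=; first by rewrite !mmapC.
  by rewrite (mmapCXi hPhi) /hPhi enum_rankK.
have CB : forall q, Phi0 (exty (tup gT (nleaves tplus)) q) = mapv (m := size (edges s)) rmf (phiGT K gT s q).
  move=> q; rewrite /exty /phiGT /Phi0 /mapv !mmap_comp.
  apply: mmap_ext => [c|i] /=; first by rewrite !mmapC.
  by rewrite (mmapCXi hPhi) /hPhi enum_rankK.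
move=> f; split => Hf; last first.
  move: Hf; rewrite /tfp => -[sq [Hsq Heq]].
  rewrite /IGT CC Heq /Phi0 mmapC_sum big_seq big1 // => pr Hpr.
  rewrite mmapCM -/Phi0; case: (Hsq pr Hpr) => [[q [Iq ->]]|[q [Jq ->]]].
    by rewrite CA Iq /mapv mmapC0 mulr0.
  by rewrite CB Jq /mapv mmapC0 mulr0.
rewrite /tfp.
pose hA := fun i : 'I_#|{: tup gT (nleaves t)}| =>
  ('X_(enum_rank (xplus (nleaves tplus) k (enum_val i))) : {mpoly K[#|{: tup gT (nleaves tplus)}|]}).
pose hB := fun i : 'I_#|{: tup gT (nleaves t)}| =>
  ('X_(enum_rank (yminus k (enum_val i))) : {mpoly K[#|{: tup gT k}|]}).
pose Ax := mmap (@mpolyC _ K) hA.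
pose By := mmap (@mpolyC _ K) hB.
have M1 : forall mm, tfp_psi (qsplit k (nleaves_gt0 tplus) 'X_[mm]) =
    extx (tup gT k) (Ax 'X_[mm]) * exty (tup gT (nleaves tplus)) (By 'X_[mm]).
  move=> mm; rewrite /tfp_psi /qsplit /extx /exty /Ax /By !mmapCX !mmapC_prod -big_split /=.
  apply: eq_bigr => i _; rewrite !mmapCXn -exprMn; congr (_ ^+ _).
  rewrite (mmapCXi _ (enum_rank (zvar k (nleaves_gt0 tplus) (enum_val i)))) enum_rankK /=.
  rewrite (mmapCXi _ (enum_rank (xplus (nleaves tplus) k (enum_val i)))).
  rewrite (mmapCXi _ (enum_rank (yminus k (enum_val i)))) !enum_rankK //.
have M2 : forall q, phiGT K gT tplus (Ax q) = mapv (m := size (edges t)) ppf (phiGT K gT t q).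
  move=> q; rewrite /Ax /phiGT /mapv !mmap_comp.
  apply: mmap_ext => [c|i] /=; first by rewrite !mmapC.
  rewrite /hA (mmapCXi _ (enum_rank (xplus (nleaves tplus) k (enum_val i)))) enum_rankK.
  by rewrite -KL2.
have M3 : forall q, phiGT K gT s (By q) = mapv (m := size (edges t)) pmf (phiGT K gT t q).
  move=> q; rewrite /By /phiGT /mapv !mmap_comp.
  apply: mmap_ext => [c|i] /=; first by rewrite !mmapC.
  rewrite /hB (mmapCXi _ (enum_rank (yminus k (enum_val i)))) enum_rankK.
  by rewrite -KL3.
pose mu := fun i : 'I_#|{: tup gT (nleaves t)}| =>
  ((\sum_(j < size (edges t)) mnm1 (enum_rank (j, isum (enum_val i) (nth (0, 0)%N (edges t) j))))%MM : 'X_{1..#|{: 'I_(size (edges t)) * gT}|}).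
pose w := fun mm : 'X_{1..#|{: tup gT (nleaves t)}|} => (\sum_(i < #|{: tup gT (nleaves t)}|) (mu i *+ mm i))%MM.
have W : forall c mm, phiGT K gT t (c *: 'X_[mm]) = c *: 'X_[w mm].
  move=> c mm; rewrite /phiGT mmapCZ mmapCX /w -mprodXnE; congr (_ *: _).
  apply: eq_bigr => i _; congr (_ ^+ _); rewrite /phi_img /mu; by rewrite -mprodXE.
set Sp := (fun u => _ \/ _).
have Bin : forall m1 m2, phiGT K gT t 'X_[m1] = phiGT K gT t 'X_[m2] ->
    ideal_gen Sp (tfp_psi (qsplit k (nleaves_gt0 tplus) 'X_[m1]) - tfp_psi (qsplit k (nleaves_gt0 tplus) 'X_[m2])).
  move=> m1 m2 H12; rewrite !M1.
  have -> : extx (tup gT k) (Ax 'X_[m1]) * exty (tup gT (nleaves tplus)) (By 'X_[m1]) -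
            extx (tup gT k) (Ax 'X_[m2]) * exty (tup gT (nleaves tplus)) (By 'X_[m2]) =
     exty (tup gT (nleaves tplus)) (By 'X_[m1]) * extx (tup gT k) (Ax 'X_[m1] - Ax 'X_[m2]) +
     extx (tup gT k) (Ax 'X_[m2]) * exty (tup gT (nleaves tplus)) (By 'X_[m1] - By 'X_[m2]).
    have hx : forall a b, extx (tup gT k) (a - b) = extx (tup gT k) a - extx (tup gT k) b.
      by move=> a b; exact: mmapCB.
    have hy : forall a b, exty (tup gT (nleaves tplus)) (a - b) = exty (tup gT (nleaves tplus)) a - exty (tup gT (nleaves tplus)) b.
      by move=> a b; exact: mmapCB.
    rewrite hx hy !mulrBr; set a1 := extx _ (Ax _); set a2 := extx _ (Ax _); set b1 := exty _ (By _); set b2 := exty _ (By _).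
    by rewrite [b1 * a1]mulrC [b1 * a2]mulrC addrA subrK.
  apply: idealD; apply: idealM; apply: idealS; [left; exists (Ax 'X_[m1] - Ax 'X_[m2])|right; exists (By 'X_[m1] - By 'X_[m2])]; split => //.
    have hp : forall a b, phiGT K gT tplus (a - b) = phiGT K gT tplus a - phiGT K gT tplus b.
      by move=> a b; exact: mmapCB.
    have := hp (Ax 'X_[m1]) (Ax 'X_[m2]); rewrite !M2 H12 subrr => E; exact: E.
  have hq : forall a b, phiGT K gT s (a - b) = phiGT K gT s a - phiGT K gT s b.
    by move=> a b; exact: mmapCB.
  have := hq (By 'X_[m1]) (By 'X_[m2]); rewrite !M3 H12 subrr => E; exact: E.
have [r [Hr Hsum]] := binom_decomp (phi := mmap (@mpolyC _ K) (fun v => phi_img K (enum_val v))) W Hf.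
have psiD : forall a b : qring K gT (nleaves t), tfp_psi (qsplit k (nleaves_gt0 tplus) (a + b)) =
    tfp_psi (qsplit k (nleaves_gt0 tplus) a) + tfp_psi (qsplit k (nleaves_gt0 tplus) b).
  move=> a b; rewrite /tfp_psi /qsplit; exact: (etrans (congr1 _ (mmapD _ _ _ _)) (mmapD _ _ _ _)).
have psiZ : forall c (a : qring K gT (nleaves t)), tfp_psi (qsplit k (nleaves_gt0 tplus) (c *: a)) =
    c *: tfp_psi (qsplit k (nleaves_gt0 tplus) a).
  move=> c a; rewrite /tfp_psi /qsplit; exact: (etrans (congr1 _ (mmapCZ _ _ _)) (mmapCZ _ _ _)).
have psi0 : tfp_psi (qsplit k (nleaves_gt0 tplus) (0 : qring K gT (nleaves t))) = 0.
  by have := psiZ 0 0; rewrite !scale0r.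
have Psum : forall (r0 : seq 'X_{1..#|{: tup gT (nleaves t)}|}) (F : 'X_{1..#|{: tup gT (nleaves t)}|} -> K) (G : 'X_{1..#|{: tup gT (nleaves t)}|} -> 'X_{1..#|{: tup gT (nleaves t)}|}),
    tfp_psi (qsplit k (nleaves_gt0 tplus) ((\sum_(m <- r0) F m *: 'X_[G m]) : qring K gT (nleaves t))) =
    \sum_(m <- r0) F m *: tfp_psi (qsplit k (nleaves_gt0 tplus) ('X_[G m] : qring K gT (nleaves t))).
  move=> r0 F G; elim: r0 => [|m r0 IH]; first by rewrite big_nil [RHS]big_nil; exact: psi0.
  by rewrite big_cons [RHS]big_cons -IH psiD psiZ.
have Ef : tfp_psi (qsplit k (nleaves_gt0 tplus) f) =
    \sum_(m <- msupp f) f@_m *: tfp_psi (qsplit k (nleaves_gt0 tplus) 'X_[m]).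
  rewrite {1}[f]mpolyE; exact: (Psum _ (fun m => f@_m) (fun m => m)).
have E0 : \sum_(m <- msupp f) f@_m *: tfp_psi (qsplit k (nleaves_gt0 tplus) 'X_[r m]) = 0.
  rewrite -(Psum _ (fun m => f@_m) r).
  have Hs' : (\sum_(m <- msupp f) f@_m *: 'X_[r m] : qring K gT (nleaves t)) = 0 by exact: Hsum.
  by rewrite Hs'; exact: psi0.
rewrite Ef -[X in ideal_gen _ X]subr0 -{2}E0 -sumrB.
apply: ideal_sum => m; rewrite -scalerBr -mul_mpolyC; apply: idealM; apply: Bin.
by move: (W 1 m) (W 1 (r m)); rewrite !scale1r Hr => -> ->.
Qed.
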